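(* Let $(X_B,X_C,X_R)$ be an OCC (not necessarily tight) in a graph $G$ and let $(A_B,A_C,A_R)$ be a tight OCC in $G$. Let $f_X\colon X_B \to \{0,1\}$ and $f_A \colon A_B \to \{0,1\}$ be proper $2$-colorings of $G[X_B]$ and $G[A_B]$ respectively. Define the following subsets of $X_B$: $A := \{ b \in X_B : b$ has a neighbor $c \in X_C \cap A_B$ with $f_X(b) = f_A(c)\}$, $R := \{ b \in X_B : b$ has a neighbor $c \in X_C \cap A_B$ with $f_X(b) \neq f_A(c)\}$, $N := N_G(X_C \cap A_R) \cap X_B$. Then $A_C \cap X_B$ is both a minimum-size $\{A,R\}$-separator and a minimum-size $\{A,R,N\}$-separator in $G[X_B]$.
   Context: An OCT of $G$ is a set $S \subseteq V(G)$ with $G - S$ bipartite; $\mathrm{oct}(G)$ is its minimum size. An odd cycle cut (OCC) of $G$ is a partition $(X_B, X_C, X_R)$ of $V(G)$ such that $G[X_B]$ is bipartite, there is no edge between $X_B$ and $X_R$, and $X_B \cup X_C \neq \emptyset$. It is tight if $|X_C| = \mathrm{oct}(G[X_B \cup X_C])$. A vertex set $X$ separates two (not necessarily disjoint) vertex sets $S,T$ in a graph if no connected component of the graph minus $X$ contains both a vertex of $S$ and a vertex of $T$; $X$ may intersect $S \cup T$. For sets $T_1,\dots,T_m$, a $\{T_1,\dots,T_m\}$-separator is a vertex set separating $T_i$ and $T_j$ for all $i \neq j$. The sets $A,R,N$ may overlap. *)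

(* Defs.v *)
(* A simple graph G is a finite type T of vertices with a
   symmetric irreflexive adjacency relation e : rel T. *)
From mathcomp Require Import all_boot.
Set Implicit Arguments. Unset Strict Implicit. Unset Printing Implicit Defensive.

Section Graph.
Variables (T : finType) (e : rel T).

Definition bipartite (S : {set T}) : bool :=
  [exists f : {ffun T -> bool},
     [forall x in S, forall y in S, e x y ==> (f x != f y)]].

Definition is_oct (S X : {set T}) : bool :=
  (X \subset S) && bipartite (S :\: X).

(* oct(G[S]) : the minimum size of an OCT of G[S] (S itself is always one). *)
Definition oct (S : {set T}) : nat :=
  \big[minn/#|S|]_(X : {set T} | is_oct S X) #|X|.

Definition is_occ (XB XC XR : {set T}) : Prop :=
  [/\ [&& [disjoint XB & XC], [disjoint XB & XR] & [disjoint XC & XR]],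
      XB :|: XC :|: XR = setT,
      bipartite XB,
      (forall x y, x \in XB -> y \in XR -> ~~ e x y) &
      XB :|: XC != set0].

Definition is_tight_occ (XB XC XR : {set T}) : Prop :=
  is_occ XB XC XR /\ #|XC| = oct (XB :|: XC).

Definition proper_2col (S : {set T}) (f : T -> bool) : Prop :=
  forall x y, x \in S -> y \in S -> e x y -> f x != f y.

Definition rel_minus (H X : {set T}) : rel T :=
  [rel x y | [&& e x y, x \in H :\: X & y \in H :\: X]].

Definition separates (H X S T' : {set T}) : Prop :=
  X \subset H /\
  forall s t, s \in S :&: (H :\: X) -> t \in T' :&: (H :\: X) ->
     ~~ connect (rel_minus H X) s t.

Definition sep2 (H X S1 S2 : {set T}) : Prop := separates H X S1 S2.
Definition sep3 (H X S1 S2 S3 : {set T}) : Prop :=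
  [/\ separates H X S1 S2, separates H X S1 S3 & separates H X S2 S3].

Definition min_sep2 (H X S1 S2 : {set T}) : Prop :=
  sep2 H X S1 S2 /\ forall Y, sep2 H Y S1 S2 -> #|X| <= #|Y|.
Definition min_sep3 (H X S1 S2 S3 : {set T}) : Prop :=
  sep3 H X S1 S2 S3 /\ forall Y, sep3 H Y S1 S2 S3 -> #|X| <= #|Y|.

End Graph.

(* Main.v *)
Require Import Defs.
From mathcomp Require Import all_boot.
Set Implicit Arguments. Unset Strict Implicit. Unset Printing Implicit Defensive.

Lemma bigmin_le (I : eqType) (r : seq I) (P : pred I) (F : I -> nat) m i0 :
  i0 \in r -> P i0 -> \big[minn/m]_(i <- r | P i) F i <= F i0.
Proof.
elim: r => [//|x r IH]; rewrite inE big_cons => /orP[/eqP <-|ir] Pi.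
  by rewrite Pi geq_minl.
case: (P x); last exact: IH.
by rewrite geq_min IH ?orbT.
Qed.

Lemma connect_inv (T : finType) (r : rel T) (P : pred T) x y :
  (forall u v, P u -> r u v -> P v) -> P x -> connect r x y -> P y.
Proof.
move=> H Px /connectP[p]; elim: p x Px => [|z p IH] x Px /=; first by move=> _ ->.
by case/andP=> rxz pz yq; exact: (IH z (H _ _ Px rxz) pz yq).
Qed.

Theorem lemma3p5 (T : finType) (e : rel T) (e_sym : symmetric e)
  (e_irr : irreflexive e)
  (XB XC XR AB AC AR : {set T}) (fX fA : T -> bool) :
  is_occ e XB XC XR ->
  is_tight_occ e AB AC AR ->
  proper_2col e XB fX ->
  proper_2col e AB fA ->
  let A := [set b in XB | [exists c in XC :&: AB, e b c && (fX b == fA c)]] in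
  let R := [set b in XB | [exists c in XC :&: AB, e b c && (fX b != fA c)]] in
  let N := [set b in XB | [exists c in XC :&: AR, e b c]] in
  min_sep2 e XB (AC :&: XB) A R /\ min_sep3 e XB (AC :&: XB) A R N.
Proof.
move=> [/and3P[dXBC dXBR dXCR] covX bipX noXBR _]
  [[/and3P[dABC dABR dACR] covA bipA noABR _] tight] fXp fAp A R N.
have in3A : forall x, [\/ x \in AB, x \in AC | x \in AR].
  move=> x; have := in_setT x; rewrite -covA !inE.
  by case/orP=> [/orP[]|] H; [apply: Or31|apply: Or32|apply: Or33].
have in3X : forall x, [\/ x \in XB, x \in XC | x \in XR].
  move=> x; have := in_setT x; rewrite -covX !inE.
  by case/orP=> [/orP[]|] H; [apply: Or31|apply: Or32|apply: Or33].
have inAB : forall b c, b \in XB -> b \notin AC -> c \in AB -> e b c -> b \in AB.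
  move=> b c bXB bAC cAB ebc; case: (in3A b) => // bAR.
    by rewrite bAR in bAC.
  by have := noABR c b cAB bAR; rewrite e_sym ebc.
set S0 := AC :&: XB.
have memS : forall x, (x \in XB :\: S0) = (x \in XB) && (x \notin AC).
  by move=> x; rewrite !inE; case: (x \in XB); case: (x \in AC).
have stepAB : forall u v, u \in AB -> rel_minus e XB S0 u v -> v \in AB.
  move=> u v uAB /and3P[euv _]; rewrite memS => /andP[vXB vAC].
  by apply: (inAB v u vXB vAC uAB); rewrite e_sym.
have inA_AB : forall s, s \in A :&: (XB :\: S0) -> (s \in AB) && (fX s != fA s).
  move=> s; rewrite inE memS => /andP[]; rewrite inE.
  move=> /andP[sXB /exists_inP[c cI /andP[esc hc]]] /andP[_ sAC].
  rewrite inE in cI; case/andP: cI => _ cAB.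
  have sAB := inAB s c sXB sAC cAB esc.
  have h := fAp s c sAB cAB esc.
  by rewrite sAB (eqP hc) /= eq_sym.
have inR_AB : forall s, s \in R :&: (XB :\: S0) -> (s \in AB) && (fX s == fA s).
  move=> s; rewrite inE memS => /andP[]; rewrite inE.
  move=> /andP[sXB /exists_inP[c cI /andP[esc hc]]] /andP[_ sAC].
  rewrite inE in cI; case/andP: cI => _ cAB.
  have sAB := inAB s c sXB sAC cAB esc.
  have h := fAp s c sAB cAB esc.
  rewrite sAB /=; move: hc h.
  by case: (fX s); case: (fA s); case: (fA c).
have inN_AB : forall s, s \in N :&: (XB :\: S0) -> s \notin AB.
  move=> s; rewrite inE => /andP[]; rewrite inE.
  move=> /andP[sXB /exists_inP[c cI esc]] _.
  rewrite inE in cI; case/andP: cI => _ cAR.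
  apply/negP => sAB; by have := noABR s c sAB cAR; rewrite esc.
have sepAB : forall S1 S2, (forall s, s \in S1 :&: (XB :\: S0) -> s \in AB) ->
    (forall s, s \in S2 :&: (XB :\: S0) -> s \notin AB) -> separates e XB S0 S1 S2.
  move=> S1 S2 h1 h2; split; first exact: subsetIr.
  move=> s t sI tI; apply/negP => cst.
  have := connect_inv (P := [pred u | u \in AB]) (stepAB) (h1 s sI) cst.
  by rewrite /= (negbTE (h2 t tI)).
have sepAR : separates e XB S0 A R.
  split; first exact: subsetIr.
  move=> s t sI tI; apply/negP => cst.
  have step : forall u v, (u \in AB) && (fX u != fA u) -> rel_minus e XB S0 u v ->
      (v \in AB) && (fX v != fA v).
    move=> u v /andP[uAB hu] r; have vAB := stepAB _ _ uAB r.
    rewrite /= vAB; case/and3P: r => euv; rewrite !memS => /andP[uXB _] /andP[vXB _].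
    have h1 := fXp u v uXB vXB euv; have h2 := fAp u v uAB vAB euv.
    by move: hu h1 h2; case: (fX u); case: (fA u); case: (fX v); case: (fA v).
  have := connect_inv (P := [pred u | (u \in AB) && (fX u != fA u)]) step (inA_AB s sI) cst.
  by case/andP: (inR_AB t tI) => _ /= /eqP ->; rewrite eqxx andbF.
have sepAN : separates e XB S0 A N.
  apply: sepAB => s sI; [by case/andP: (inA_AB s sI) | exact: inN_AB].
have sepRN : separates e XB S0 R N.
  apply: sepAB => s sI; [by case/andP: (inR_AB s sI) | exact: inN_AB].
have minY : forall Y, sep2 e XB Y A R -> #|S0| <= #|Y|.
  move=> Y [_ Ysep].
  pose r := rel_minus e XB Y.
  have rsym : symmetric r.
    move=> x y; rewrite /r /rel_minus /= e_sym.
    by case: (x \in XB :\: Y); case: (y \in XB :\: Y); rewrite ?andbF.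
  pose gX := fun v => if [exists a in A :\: Y, connect r v a] then ~~ fX v else fX v.
  pose g := fun v => if v \in XB then gX v else fA v.
  set Z := (AC :\: XB) :|: (Y :&: (AB :|: AC)).
  have Wmem : forall u, u \in (AB :|: AC) :\: Z -> u \notin Y /\ (u \notin XB -> u \in AB).
    move=> u; rewrite !inE.
    by case: (u \in Y); case: (u \in XB); case: (u \in AB); case: (u \in AC).
  have mixed : forall u v, u \in XB -> u \notin Y -> v \notin XB -> v \in AB -> e u v ->
      gX u != fA v.
    move=> u v uXB uY vXB vAB euv.
    have vXC : v \in XC.
      case: (in3X v) => // vXR; first by rewrite vXR in vXB.
      by have := noXBR u v uXB vXR; rewrite euv.
    case hv: (fX u == fA v).
      have uA : u \in A :\: Y.
        rewrite !inE uY uXB /=; apply/exists_inP; exists v; first by rewrite !inE vXC.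
        by rewrite euv hv.
      rewrite /gX; have -> : [exists a in A :\: Y, connect r u a].
        by apply/exists_inP; exists u.
      by rewrite (eqP hv); case: (fA v).
    have uR : u \in R :&: (XB :\: Y).
      rewrite !inE uY uXB /= andbT; apply/exists_inP; exists v; first by rewrite !inE vXC.
      by rewrite euv hv.
    rewrite /gX; case: exists_inP => [[a aI cua]|_]; last by rewrite hv.
    have aI' : a \in A :&: (XB :\: Y).
      move: aI; rewrite !inE => /andP[aY /andP[aXB ->]]; by rewrite aY aXB.
    have := Ysep a u aI' uR; rewrite (sym_connect_sym rsym) cua //.
  have octZ : is_oct e (AB :|: AC) Z.
    apply/andP; split.
      apply/subsetP => x; rewrite !inE.
      by case: (x \in AB); case: (x \in AC); rewrite ?andbF ?orbT.
    apply/existsP; exists [ffun v => g v].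
    apply/forallP => u; apply/implyP => uW; apply/forallP => v; apply/implyP => vW.
    apply/implyP => euv; rewrite !ffunE /g.
    case: (Wmem u uW) => uY uA; case: (Wmem v vW) => vY vA.
    case: ifP => uXB; case: ifP => vXB.
    - have ruv : r u v by rewrite /r /rel_minus /= euv !inE uY vY uXB vXB.
      have h := fXp u v uXB vXB euv.
      rewrite /gX; have -> : [exists a in A :\: Y, connect r v a] = [exists a in A :\: Y, connect r u a].
        apply/exists_inP/exists_inP => [][a aI ca]; exists a => //.
          exact: connect_trans (connect1 ruv) ca.
        apply: connect_trans _ ca; apply: connect1; by rewrite rsym.
      rewrite /gX; case: ifP => _ //; by move: h; case: (fX u); case: (fX v).
    - by apply: mixed => //; rewrite ?vXB ?vA ?vXB.
    - rewrite eq_sym; apply: mixed => //; rewrite ?uXB ?uA ?uXB //; by rewrite e_sym.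
    - by apply: fAp => //; [apply: uA | apply: vA]; rewrite ?uXB ?vXB.
  have octle : oct e (AB :|: AC) <= #|Z|.
    by rewrite /oct; apply: bigmin_le octZ; exact: mem_index_enum.
  have Zle : #|Z| <= #|AC :\: XB| + #|Y|.
    apply: leq_trans (leq_card_setU _ _) _; rewrite leq_add2l.
    by apply: subset_leq_card; exact: subsetIl.
  have := cardsID XB AC; rewrite -/S0 => hAC.
  move: (leq_trans octle Zle); rewrite -tight -hAC addnC leq_add2l //.
split; split => //.
  by move=> Y [Ys _ _]; apply: minY.
Qed.
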